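(* Let $q$ be a prime power, $m$ a positive integer, $n=q^m-1$, and $\delta$ an integer with $2\le\delta\le q^{\lceil m/2\rceil}+1$ (and $\delta\le n$). Then the primitive, narrow-sense BCH code $\mathcal{BCH}(n,q;\delta)$ over $\mathbf{F}_q$ has dimension $$k=q^m-1-m\left\lceil(\delta-1)(1-1/q)\right\rceil.$$
   Context: Let $\alpha$ be a primitive element of $\mathbf{F}_{q^m}$ and $n=q^m-1$; $C_x=\{xq^k\bmod n\mid k\in\mathbf{Z}\}$ is the $q$-ary cyclotomic coset of $x$ modulo $n$. For $2\le\delta\le n$, $\mathcal{BCH}(n,q;\delta)$ is the cyclic code of length $n$ over $\mathbf{F}_q$ with generator polynomial $\prod_{z\in Z}(x-\alpha^z)$, where $Z=C_1\cup\cdots\cup C_{\delta-1}$. *)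

(* Defs.v *)
From HB Require Import structures.
From mathcomp Require Import all_boot all_order all_algebra all_field.
Set Implicit Arguments. Unset Strict Implicit. Unset Printing Implicit Defensive.
Import GRing.Theory.
Local Open Scope ring_scope.

Definition ceil_div (a b : nat) : nat := ((a + b.-1) %/ b)%N.

(* Z = C_1 U ... U C_{delta-1}, as the (duplicate-free) list of residues z < n
   with z = x * q^k mod n for some 1 <= x <= delta-1 and some k.
   Since q^m = 1 mod n, it suffices to take 0 <= k < m. *)
Definition bch_Z (q m n delta : nat) : seq nat :=
  [seq z <- iota 0 n |
     [exists x : 'I_delta, exists k : 'I_m,
        (0 < (x : nat))%N && (z == (x * q ^ k) %% n)%N]].

Definition bch_gen (L : fieldType) (alpha : L) (q m n delta : nat) : {poly L} :=
  \prod_(z <- bch_Z q m n delta) ('X - (alpha ^+ z)%:P).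

Definition bch_word (F : finFieldType) (L : fieldExtType F) (alpha : L)
    (q m n delta : nat) (c : 'rV[F]_n) : bool :=
  bch_gen alpha q m n delta %| map_poly (GRing.in_alg L) (\sum_(i < n) (c 0 i)%:P * 'X^i).

Definition BCH (F : finFieldType) (L : fieldExtType F) (alpha : L)
    (q m n delta : nat) : {vspace 'rV[F]_n} :=
  <<[seq c <- enum [set: 'rV[F]_n] | @bch_word F L alpha q m n delta c]>>%VS.

(* Main.v *)
Require Import Defs.
From HB Require Import structures.
From mathcomp Require Import all_boot all_order all_algebra all_field.
From mathcomp Require Import zify.


Lemma qm_mod (q m x n : nat) : n = q ^ m - 1 -> 1 < n -> x * q ^ m = x %[mod n].
Proof.
move=> En n1. have -> : q ^ m = n + 1 by lia.
by rewrite mulnDr muln1 modnMDl.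
Qed.

Lemma keyK (q m h x j : nat) : 1 < q -> (m <= 2 * h) -> (2 * h <= m + 1) ->
  x < q ^ h -> ~~ (q %| x) -> x < q ^ m - 1 -> 0 < j < m ->
  (q %| (x * q ^ j) %% (q ^ m - 1)) || (q ^ h <= (x * q ^ j) %% (q ^ m - 1)).
Proof.
move=> q1 h1 h2 xh qx xn /andP[j0 jm].
set y := (x * q ^ j) %% (q ^ m - 1).
set r := m - j.
have r0 : 0 < r by rewrite /r; lia.
have qm : q ^ m = q ^ j * q ^ r by rewrite -expnD /r; congr (_ ^ _); lia.
set a := x %% q ^ r. set b := x %/ q ^ r.
have xab : x = b * q ^ r + a by rewrite /a /b -divn_eq.
have aq : a < q ^ r by rewrite /a ltn_mod expn_gt0; lia.
have Pj : 0 < q ^ j by rewrite expn_gt0; lia.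
have Qr : 0 < q ^ r by rewrite expn_gt0; lia.
have bq : b < q ^ j.
  rewrite /b ltn_divLR // -qm; lia.
have ey : y = b + a * q ^ j.
  rewrite /y xab mulnDl -mulnA (mulnC (q ^ r)) -qm.
  have -> : b * q ^ m + a * q ^ j = b * (q ^ m - 1) + (b + a * q ^ j).
    have : 0 < q ^ m by rewrite expn_gt0; lia.
    move=> ?; rewrite mulnBr muln1. have : b <= b * q ^ m by rewrite leq_pmulr.
    lia.
  rewrite modnMDl modn_small //.
  move: xn; rewrite xab qm => xn.
  set P := q ^ j in Pj bq xn *. set Q := q ^ r in Qr aq xn *.
  have H1 : a * P + P <= Q * P.
    have : a.+1 * P <= Q * P by rewrite leq_mul2r aq orbT.
    rewrite mulSn; lia.
  have H2 : Q <= P * Q by rewrite leq_pmull.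
  rewrite (mulnC Q P) in H1.
  case: (ltnP b (P - 1)) => hb.
    lia.
  have eb : b = P - 1 by move: hb bq; clear; lia.
  case: (ltnP a.+1 Q) => ha.
    have H3 : a * P + 2 * P <= P * Q by rewrite (mulnC P Q) -mulnDl leq_mul2r; lia.
    lia.
  have ea : a = Q - 1 by move: ha aq; clear; lia.
  exfalso; move: xn H2 Qr; rewrite eb ea mulnBl mul1n; clear; lia.
rewrite ey.
case: (posnP b) => [b0 | bpos].
  by rewrite b0 add0n dvdn_mull // dvdn_exp.
apply/orP; right.
have rh : r < h.
  have : q ^ r <= x by rewrite xab; have := leq_pmull (q ^ r) bpos; lia.
  move=> h3; have : q ^ r < q ^ h by lia.
  by rewrite ltn_exp2l.
have a0 : 0 < a.
  rewrite lt0n; apply/negP => /eqP a0.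
  move: qx; rewrite xab a0 addn0 dvdn_mull //.
  by rewrite dvdn_exp.
have : q ^ h <= q ^ j by rewrite leq_exp2l //; rewrite /r in rh; lia.
have := leq_pmull (q ^ j) a0; lia.
Qed.

Lemma decomp (q x : nat) : 1 < q -> 0 < x -> exists e x0, x = x0 * q ^ e /\ ~~ (q %| x0).
Proof.
move=> q1; elim: x {-2}x (leqnn x) => [|N IH] x xN x0; first by lia.
case qx: (q %| x); last by exists 0, x; rewrite expn0 muln1 qx.
have Hx : x = (x %/ q) * q by rewrite divnK.
have x0' : 0 < x %/ q by rewrite divn_gt0; [ | lia]; apply: dvdn_leq.
have : x %/ q <= N.
  have : x %/ q < x by rewrite ltn_Pdiv.
  lia.
move=> /IH /(_ x0') [e [y [Ey qy]]].
exists e.+1, y; split => //; rewrite expnS Hx Ey; lia.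
Qed.

Lemma count_nondiv (q D : nat) : 0 < q ->
  count (fun x => ~~ (q %| x)) (iota 1 D) = D - D %/ q.
Proof.
move=> q0; elim: D => [|D IH]; first by rewrite div0n.
rewrite -(addn1 D) iotaD count_cat IH /= addn0 add1n addn1 (divnS _ q0).
have : D %/ q <= D by rewrite leq_div.
by case: (q %| D.+1) => /=; lia.
Qed.

Lemma ceil_eq (q D : nat) : 0 < q -> (D * (q - 1) + q.-1) %/ q = D - D %/ q.
Proof.
move=> q0.
have rq : D %% q < q by rewrite ltn_mod.
have -> : D * (q - 1) + q.-1 = (D - D %/ q) * q + (q.-1 - D %% q).
  case: q q0 rq => [//|s] _ rs /=.
  rewrite subn1 /=.
  rewrite {1 2}(divn_eq D s.+1).
  move: rs; set t := D %/ s.+1; set r := D %% s.+1; clearbody t r => rs.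
  have -> : t * s.+1 + r - t = t * s + r by rewrite mulnS; lia.
  rewrite !mulnS !mulnDl (mulnC r s); move: (t * s) (t * s * s) (s * r) => a b c; lia.
rewrite divnMDl // [(q.-1 - _) %/ q]divn_small ?addn0 //; lia.
Qed.

Lemma qpow_mod (q m n x k : nat) : n = q ^ m - 1 -> 1 < n -> 0 < m ->
  x * q ^ k = x * q ^ (k %% m) %[mod n].
Proof.
move=> En n1 m0; rewrite {1}(divn_eq k m).
elim: (k %/ m) => [|t IH]; first by rewrite mul0n add0n.
rewrite mulSn -addnA expnD mulnCA mulnC (qm_mod _ _ _ _ En n1) IH //.
Qed.

Lemma size_Z q m delta : 1 < q -> 0 < m -> 2 <= delta ->
  delta <= q ^ uphalf m + 1 -> delta <= q ^ m - 1 ->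
  size (bch_Z q m (q ^ m - 1) delta) = m * ceil_div ((delta - 1) * (q - 1)) q.
Proof.
move=> q1 m0 d2 dh dn.
set n := q ^ m - 1. set D := delta - 1. set h := uphalf m.
have En : n = q ^ m - 1 by [].
have n1 : 1 < n by lia.
have [hh1 hh2] : m <= 2 * h /\ 2 * h <= m + 1.
  rewrite /h uphalfE; have := odd_double_half m.+1; rewrite -muln2.
  move: (m.+1./2) => k; clear; case: (odd m.+1) => /=; lia.
have Dh : D <= q ^ h by rewrite /D /h; lia.
have h0 : 0 < h by lia.
have Dn : D < n by rewrite /D /n; lia.
set S := [seq x <- iota 1 D | ~~ (q %| x)].
have Sprop : forall x, x \in S -> [/\ 0 < x, x <= D, x < q ^ h & ~~ (q %| x)].
  move=> x; rewrite mem_filter mem_iota => /andP[qx /andP[x1 xD]].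
  split => //.
  rewrite ltn_neqAle; apply/andP; split; last by lia.
  apply/negP => /eqP ex; move: qx; rewrite ex dvdn_exp //.
set f := fun x k => (x * q ^ k) %% n.
have key : forall x x' j j', x \in S -> x' \in S -> j' <= j < m ->
    f x j = f x' j' -> x = x' /\ j = j'.
  move=> x x' j j' Sx Sx' /andP[jj jm]; rewrite /f => E.
  have [x0 xD xh qx] := Sprop x Sx.
  have [x0' xD' xh' qx'] := Sprop x' Sx'.
  have E2 : x = (x' * q ^ (j' + (m - j))) %% n.
    have : (x * q ^ j * q ^ (m - j)) %% n = (x' * q ^ j' * q ^ (m - j)) %% n.
      by rewrite -modnMml E modnMml.
    rewrite -!mulnA -!expnD subnKC; last by lia.
    rewrite (qm_mod _ _ _ _ En n1) (modn_small (_ : x < n)) //.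
    exact: leq_ltn_trans xD Dn.
  case: (ltnP (j' + (m - j)) m) => t.
    exfalso.
    have := @keyK q m h x' (j' + (m - j)) q1 hh1 hh2 xh' qx' (_ : x' < q ^ m - 1) (_ : 0 < j' + (m - j) < m).
    rewrite -/n -E2 (negbTE qx) /= => H.
    have : q ^ h <= x.
      apply: H; first exact: leq_ltn_trans xD' Dn.
      by rewrite t addn_gt0 subn_gt0 jm orbT.
    by rewrite leqNgt xh.
  have ej : j = j' by move: t jj jm; clear; lia.
  split => //.
  move: E2; rewrite ej subnKC; last by rewrite ltnW // -ej.
  rewrite (qm_mod _ _ _ _ En n1) modn_small //.
  exact: leq_ltn_trans xD' Dn.
have perm : perm_eq (bch_Z q m n delta) [seq f x k | x <- S, k <- iota 0 m].
  apply: uniq_perm.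
  - by rewrite filter_uniq // iota_uniq.
  - apply: allpairs_uniq; first by rewrite filter_uniq // iota_uniq.
      exact: iota_uniq.
    move=> [x j] [x' j'] /allpairsP[[a b] [/= Ha Hb [-> ->]]].
    move=> /allpairsP[[a' b'] [/= Ha' Hb' [-> ->]]] /= E.
    move: Hb Hb'; rewrite !mem_iota !add0n => Hb Hb'.
    case: (leqP b' b) => c.
      have H2 : b' <= b < m by move: c Hb; clear; lia.
      by have [-> ->] := key a a' b b' Ha Ha' H2 E.
    have H2 : b <= b' < m by move: c Hb'; clear; lia.
    by have [-> ->] := key a' a b' b Ha' Ha H2 (esym E).
  - move=> z; rewrite mem_filter mem_iota /=.
    apply/idP/allpairsP.
      move=> /andP[/existsP[x /existsP[k /andP[x0 /eqP Ez]]] _].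
      have [e [y [Ey qy]]] := decomp q x q1 x0.
      have y0 : 0 < y by move: x0; rewrite Ey; case: y {Ey qy} => //; rewrite mul0n.
      have qey : q ^ e <= x by rewrite Ey leq_pmull.
      have yx : y <= x by rewrite Ey leq_pmulr // expn_gt0; lia.
      have em : e < m.
        have : q ^ e < q ^ m by have := ltn_ord x; lia.
        by rewrite ltn_exp2l.
      exists (y, (e + k) %% m); split => /=.
      + by rewrite mem_filter qy mem_iota /D; have := ltn_ord x; lia.
      + by rewrite mem_iota add0n ltn_pmod.
      + rewrite Ez /f Ey -mulnA -expnD.
        exact: (qpow_mod _ _ _ _ _ En n1 m0).
    move=> [[x k] [/= Hx Hk ->]].
    have [x0 xD xh qx] := Sprop x Hx.
    move: Hk; rewrite mem_iota add0n => /andP[_ km].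
    have xd : x < delta by move: xD d2; rewrite /D; clear; lia.
    rewrite /f ltn_pmod ?andbT; last by move: n1; clear; lia.
    apply/existsP; exists (Ordinal xd).
    apply/existsP; exists (Ordinal km) => /=.
    by rewrite x0 eqxx.
rewrite (perm_size perm) size_allpairs size_iota size_filter count_nondiv; last by lia.
rewrite /ceil_div ceil_eq; [by rewrite mulnC | lia].
Qed.

Lemma Zq_perm q m delta : 1 < q ^ m - 1 -> 0 < m ->
  perm_eq [seq (z * q) %% (q ^ m - 1) | z <- bch_Z q m (q ^ m - 1) delta]
          (bch_Z q m (q ^ m - 1) delta).
Proof.
move=> n1 m0; set n := q ^ m - 1; have En : n = q ^ m - 1 by [].
set Z := bch_Z q m n delta.
have ZP : forall z, z \in Z -> z < n.
  by move=> z; rewrite mem_filter mem_iota => /andP[_ /andP[_]].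
have uZ : uniq Z by rewrite filter_uniq // iota_uniq.
have inj : {in Z &, injective (fun z => (z * q) %% n)}.
  move=> z1 z2 H1 H2 E.
  have := congr1 (fun y => (y * q ^ m.-1) %% n) E => /=.
  rewrite !modnMml -!mulnA -!expnS prednK // !(qm_mod _ _ _ _ En n1).
  by rewrite !modn_small ?ZP.
have uM : uniq [seq (z * q) %% n | z <- Z] by rewrite map_inj_in_uniq.
have sub : {subset [seq (z * q) %% n | z <- Z] <= Z}.
  move=> y /mapP[z Hz ->].
  move: Hz; rewrite !mem_filter !mem_iota /= ltn_pmod ?andbT; last by lia.
  move=> /andP[/existsP[x /existsP[k /andP[x0 /eqP ->]]] _].
  apply/existsP; exists x; apply/existsP.
  have km : (k.+1 %% m < m) by rewrite ltn_pmod.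
  exists (Ordinal km); rewrite x0 /=.
  by rewrite modnMml -mulnA -expnSr (qpow_mod _ _ _ _ _ En n1 m0).
have szle : (size Z <= size [seq (z * q) %% n | z <- Z])%N by rewrite size_map.
have [_ eqZ] := uniq_min_size uM sub szle.
exact: uniq_perm.
Qed.


Import GRing.Theory.
Local Open Scope ring_scope.

Lemma frob_fixed (F : finFieldType) (L : fieldExtType F) (p : {poly L}) :
  map_poly (fun x => x ^+ #|F|) p = p -> p \is a polyOver 1%VS.
Proof.
move=> Hp; apply/polyOverP => i.
have := Fermat's_little_theorem (1%AS : {subfield L}) p`_i.
rewrite dimv1 expn1 => ->.
have := congr1 (fun r : {poly L} => r`_i) Hp.
have f0 : (0 : L) ^+ #|F| = 0.
  by rewrite expr0n; have := finNzRing_gt1 F; case: #|F|.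
by rewrite coef_map_id0 // => ->.
Qed.

Lemma frob_prod (F : finFieldType) (L : fieldExtType F) (s : seq nat) (c : nat -> L) :
  map_poly (fun x => x ^+ #|F|) (\prod_(z <- s) ('X - (c z)%:P)) =
  \prod_(z <- s) ('X - ((c z) ^+ #|F|)%:P).
Proof.
pose f (x : L) := x ^+ #|F|.
have fA : zmod_morphism f.
  rewrite /f => x y; rewrite ?exprMn ?expr1n //.
  have [p _ pcharFp] := finPcharP F; rewrite (card_pprimeChar pcharFp).
  elim: (logn _ _) => // n IHn; rewrite expnSr !exprM {}IHn.
  by rewrite -(pchar_lalg L) in pcharFp; rewrite -pFrobenius_autE rmorphB.
have fM : monoid_morphism f.
  by rewrite /f; split=> [|x y]; rewrite ?exprMn ?expr1n //.
pose faM := GRing.isZmodMorphism.Build _ _ f fA.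
pose fmM := GRing.isMonoidMorphism.Build _ _ f fM.
pose fRM : {rmorphism L -> L} := HB.pack f faM fmM.
change (map_poly fRM (\prod_(z <- s) ('X - (c z)%:P)) = \prod_(z <- s) ('X - ((c z) ^+ #|F|)%:P)).
rewrite rmorph_prod; apply: eq_bigr => z _; exact: map_polyXsubC.
Qed.


Theorem mainTheorem6 (F : finFieldType) (L : fieldExtType F) (q m : nat)
  (alpha : L) (delta : nat) :
  #|F| = q ->
  (0 < m)%N ->
  \dim {: L} = m ->
  (q ^ m - 1).-primitive_root alpha ->
  (2 <= delta)%N ->
  (delta <= q ^ uphalf m + 1)%N ->
  (delta <= q ^ m - 1)%N ->
  \dim (BCH alpha q m (q ^ m - 1) delta)
    = (q ^ m - 1 - m * ceil_div ((delta - 1) * (q - 1)) q)%N.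
Proof.
move=> cardF m0 dimL prim d2 dh dn.
have q1 : (1 < q)%N by rewrite -cardF finNzRing_gt1.
have sizeZ := size_Z q m delta q1 m0 d2 dh dn.
rewrite -sizeZ.
set n := (q ^ m - 1)%N.
have n1 : (1 < n)%N by rewrite /n; lia.
set Z := bch_Z q m n delta.
set d := size Z.
have dn' : (d <= n)%N by rewrite /d /Z /bch_Z size_filter; apply: leq_trans (count_size _ _) _; rewrite size_iota.
set g := bch_gen alpha q m n delta.
have gF : g \is a polyOver 1%VS.
  apply: frob_fixed; rewrite /g /bch_gen frob_prod cardF.
  rewrite -[RHS](perm_big _ (Zq_perm q m delta n1 m0)) big_map.
  apply: eq_bigr => z _; by rewrite -exprM prim_expr_mod.
have [g0 Eg] := polyOver1P gF.
have szg : size g = d.+1 by rewrite size_prod_XsubC.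
have szg0 : size g0 = d.+1 by rewrite -szg Eg size_map_poly.
have g0nz : g0 != 0 by rewrite -size_poly_gt0 szg0.
have word : forall c : 'rV[F]_n, @bch_word F L alpha q m n delta c = (g0 %| rVpoly c).
  move=> c; rewrite /bch_word -/g Eg dvdp_map; congr (_ %| _).
  rewrite /rVpoly poly_def; apply: eq_bigr => i _; by rewrite valK mul_polyC.
set k := (n - d)%N.
pose encf (h : 'rV[F]_k) : 'rV[F]_n := poly_rV (g0 * rVpoly h).
have encL : linear encf.
  move=> a u v; rewrite /encf linearP mulrDr -scalerAr linearP.
  by [].
pose encM : {linear 'rV[F]_k -> 'rV[F]_n} :=
  HB.pack encf (GRing.isLinear.Build F _ _ *:%R encf encL).
pose E := linfun encM.
have szenc : forall u : 'rV[F]_k, (size (g0 * rVpoly u)%R <= n)%N.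
  move=> u; apply: (leq_trans (size_polyMleq _ _)).
  rewrite szg0 /=.
  have : (size (rVpoly u) <= k)%N by apply: size_poly.
  rewrite /k; move: (size (rVpoly u)) dn' => s; clear; lia.
have Einj : lker E == 0%VS.
  apply/lker0P => u v; rewrite !lfunE /= /encf => H.
  have := congr1 rVpoly H; rewrite !poly_rV_K ?szenc //.
  by move=> /(mulfI g0nz) /(can_inj rVpolyK).
have BCH_eq : BCH alpha q m n delta = (E @: fullv)%VS.
  apply/eqP; rewrite eqEsubv; apply/andP; split.
  - apply/span_subvP => c; rewrite mem_filter => /andP[wc _].
    rewrite word in wc.
    apply/memv_imgP; exists (poly_rV (rVpoly c %/ g0)); first exact: memvf.
    rewrite lfunE /= /encf poly_rV_K.
      by rewrite mulrC divpK // rVpolyK.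
    rewrite size_divp // szg0 /=.
    have : (size (rVpoly c) <= n)%N by apply: size_poly.
    rewrite /k; move: (size (rVpoly c)) dn' => s; clear; lia.
  - apply/subvP => c /memv_imgP [u _ ->]; apply: memv_span.
    rewrite mem_filter mem_enum in_setT andbT word lfunE /= /encf poly_rV_K ?szenc //.
    exact: dvdp_mulIl.
rewrite BCH_eq limg_dim_eq; last by rewrite (eqP Einj) capv0.
by rewrite dimvf dim_matrix mul1r.
Qed.
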